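(* Let $n\ge 1$, $0<\nu\le 1$, $\rho>0$, and define on $\mathbb{R}^n$ $$f_0(\xi)=\exp(\rho|\xi|^\nu),\qquad f(\xi)=\exp\big(\rho(|\xi|^\nu\vee 1)\big).$$ Then for all $\xi,\eta\in\mathbb{R}^n$ the function $f$ satisfies: (i) $f(\xi)\le f(\xi-\eta)f(\eta)$ for all $\xi,\eta$; (ii) $f(\xi)\le f(\xi-\eta)f_0(\eta)^\nu$ whenever $|\xi|\wedge|\eta|\le|\xi-\eta|$; (iii) $|f(\xi)-f(\eta)|\,|\eta|^{1-\nu}\le |\xi-\eta|^{1-\nu}f(\xi-\eta)f(\eta)$ for all $\xi,\eta$; (iv) $|f(\xi)-f(\eta)|\,|\eta|^{1-\nu}\le C|\xi-\eta|^{1-\nu}f_0(\xi-\eta)^\nu f(\eta)$ whenever $|\xi|\wedge|\xi-\eta|\le|\eta|$; (v) $|f(\xi)-f(\eta)|\,|\eta|^{1-\nu}\le C|\xi-\eta|^{1-\nu}f(\xi-\eta)f_0(\eta)^\nu$ whenever $|\xi|\wedge|\eta|\le|\xi-\eta|$. In (iv) and (v) one can take $C=1$, except in the region $|\xi|\le|\xi-\eta|\le|\eta|$ where one can take $C=2^{1-\nu}$. Moreover, the function $f_0$ satisfies the same estimates (i)–(v) as $f$ (with $f$ replaced by $f_0$ throughout).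
   Context: $a\vee b=\max(a,b)$, $a\wedge b=\min(a,b)$. *)

(* Defs.v *)
From HB Require Import structures.
From mathcomp Require Import all_boot all_order all_algebra.
From mathcomp Require Import all_classical all_reals all_analysis.
Set Implicit Arguments. Unset Strict Implicit. Unset Printing Implicit Defensive.
Import Order.TTheory GRing.Theory Num.Theory.
Local Open Scope ring_scope.

Definition enorm (R : realType) (n : nat) (x : 'rV[R]_n) : R :=
  Num.sqrt (\sum_(i < n) x 0 i ^+ 2).

Definition f0 (R : realType) (n : nat) (rho nu : R) (x : 'rV[R]_n) : R :=
  expR (rho * powR (enorm x) nu).

Definition fw (R : realType) (n : nat) (rho nu : R) (x : 'rV[R]_n) : R :=
  expR (rho * Num.max (powR (enorm x) nu) 1).

Definition Cconst (R : realType) (n : nat) (nu : R) (xi eta : 'rV[R]_n) : R :=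
  if (enorm xi <= enorm (xi - eta)) && (enorm (xi - eta) <= enorm eta)
  then powR 2 (1 - nu) else 1.

(* Estimates (i)-(v) for a weight g, with f_0 := h (the f_0 appearing with
   exponent nu on the right-hand sides). *)
Definition estimates (R : realType) (n : nat) (nu : R)
    (g h : 'rV[R]_n -> R) : Prop :=
  forall xi eta : 'rV[R]_n,
  g xi <= g (xi - eta) * g eta /\
  (Num.min (enorm xi) (enorm eta) <= enorm (xi - eta) ->
     g xi <= g (xi - eta) * powR (h eta) nu) /\
  `|g xi - g eta| * powR (enorm eta) (1 - nu)
     <= powR (enorm (xi - eta)) (1 - nu) * g (xi - eta) * g eta /\
  (Num.min (enorm xi) (enorm (xi - eta)) <= enorm eta ->
     `|g xi - g eta| * powR (enorm eta) (1 - nu)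
       <= Cconst nu xi eta * powR (enorm (xi - eta)) (1 - nu)
          * powR (h (xi - eta)) nu * g eta) /\
  (Num.min (enorm xi) (enorm eta) <= enorm (xi - eta) ->
     `|g xi - g eta| * powR (enorm eta) (1 - nu)
       <= Cconst nu xi eta * powR (enorm (xi - eta)) (1 - nu)
          * g (xi - eta) * powR (h eta) nu).

(* Main.v *)
Require Import Defs.
From HB Require Import structures.
From mathcomp Require Import all_boot all_order all_algebra.
From mathcomp Require Import all_classical all_reals all_analysis.
From mathcomp Require Import lra ring.
Import Order.TTheory GRing.Theory Num.Theory.
Local Open Scope ring_scope.

Section Pw.
Variable R : realType.
Implicit Types x y : R.

Lemma bern (X r : R) : 0 <= X -> 0 <= r <= 1 -> powR X r <= 1 + r * (X - 1).
Proof.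
move=> X0 /andP[r0 r1].
case: (eqVneq r 0) => [->|rn0]; first by rewrite powRr0 mul0r addr0.
case: (eqVneq r 1) => [->|rn1]; first by rewrite powRr1 // mul1r; lra.
have rp : 0 < r by rewrite lt_neqAle eq_sym rn0.
have rl : r < 1 by rewrite lt_neqAle rn1.
have q0 : 0 < 1 - r by lra.
have := @conjugate_powR R (powR X r) 1 (r^-1) ((1 - r)^-1) (powR_ge0 _ _) ler01.
rewrite !invr_gt0 rp q0 => /(_ isT isT).
rewrite !invrK addrC subrK => /(_ erefl).
rewrite -powRrM mulfV ?gt_eqF // powRr1 // powR1 mulr1.
move=> h; apply: (le_trans h); rewrite mulrC; lra.
Qed.

Lemma expconv (x y : R) : 0 <= x <= y -> 0 < y ->
  y * (expR x - 1) <= x * (expR y - 1).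
Proof.
move=> /andP[x0 xy] y0.
have e : expR x = powR (expR y) (x / y).
  by rewrite -expRM mulrC divfK // gt_eqF.
have r01 : 0 <= x / y <= 1.
  by apply/andP; split; [rewrite divr_ge0 // ltW | rewrite ler_pdivrMr // mul1r].
have h := @bern (expR y) (x/y) (expR_ge0 y) r01; rewrite -e in h.
have h' : expR x - 1 <= x / y * (expR y - 1) by lra.
rewrite -(ler_pM2l y0) in h'; apply: (le_trans h').
by rewrite mulrA mulrCA divff ?gt_eqF // mulr1.
Qed.
End Pw.

Set Implicit Arguments. Unset Strict Implicit.

Section Pw2.
Variables (R : realType) (nu : R).
Hypotheses (nu0 : 0 < nu) (nu1 : nu <= 1).

Lemma Pmono (x y : R) : 0 <= x -> x <= y -> x `^ nu <= y `^ nu.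
Proof.
have N0 := nu0; have N1 := nu1.
move=> x0 xy; apply: (ge0_ler_powR (ltW nu0)) => //; rewrite nnegrE //.
exact: le_trans xy.
Qed.

Lemma Qmono (x y : R) : 0 <= x -> x <= y -> x `^ (1 - nu) <= y `^ (1 - nu).
Proof.
have N0 := nu0; have N1 := nu1.
move=> x0 xy; have h1 : 0 <= 1 - nu by rewrite subr_ge0.
apply: (ge0_ler_powR h1) => //; rewrite nnegrE //.
exact: le_trans xy.
Qed.

Lemma PQ (t : R) : 0 <= t -> t `^ nu * t `^ (1 - nu) = t.
Proof.
have N0 := nu0; have N1 := nu1.
move=> t0; rewrite -powRD; first by rewrite addrC subrK powRr1.
by rewrite addrC subrK oner_eq0.
Qed.

Lemma Ptan (a u : R) : 0 < a -> 0 <= u ->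
  u `^ nu <= a `^ nu + nu * a `^ nu * (u - a) / a.
Proof.
have N0 := nu0; have N1 := nu1.
move=> a0 u0.
have e : u = a * (u / a) by rewrite mulrC divfK // gt_eqF.
have ua : 0 <= u / a by rewrite divr_ge0 // ltW.
rewrite {1}e (powRM _ (ltW a0) ua).
have hb := @bern R (u / a) nu ua (_ : 0 <= nu <= 1).
rewrite (ltW nu0) nu1 in hb; have {}hb := hb isT.
apply: (le_trans (ler_wpM2l (powR_ge0 _ _) hb)).
suff -> : a `^ nu * (1 + nu * (u / a - 1)) = a `^ nu + nu * a `^ nu * (u - a) / a by [].
by field; rewrite gt_eqF.
Qed.

Lemma PL2 (x y : R) : 0 <= y -> y <= x ->
  (x + y) `^ nu <= x `^ nu + nu * y `^ nu.
Proof.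
have N0 := nu0; have N1 := nu1.
move=> y0 yx.
have [x0|x0] := eqVneq x 0.
  have y0' : y = 0 by apply: le_anti; rewrite y0 -x0 yx.
  rewrite x0 y0' addr0 powR0 ?gt_eqF //; lra.
have xp : 0 < x by rewrite lt_neqAle eq_sym x0 (le_trans y0 yx).
have h := Ptan xp (_ : 0 <= x + y); rewrite addrAC subrr add0r in h.
apply: (le_trans (h _)); first by rewrite addr_ge0 // ltW.
rewrite lerD2l.
have key : x `^ nu * y <= y `^ nu * x.
  rewrite -{1}(PQ y0) -{2}(PQ (ltW xp)) mulrCA mulrA [y `^ nu * x `^ nu]mulrC.
  by rewrite mulrA [y `^ nu * _]mulrC ler_wpM2l ?mulr_ge0 ?powR_ge0 // Qmono.
rewrite ler_pdivrMr //.
by rewrite -mulrA -[X in _ <= X]mulrA ler_wpM2l // ltW.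
Qed.

Lemma PL1 (x y : R) : 0 <= x -> 0 <= y -> (x + y) `^ nu <= x `^ nu + y `^ nu.
Proof.
have N0 := nu0; have N1 := nu1.
move=> x0 y0.
have [yx|xy] := leP y x.
  apply: (le_trans (PL2 y0 yx)).
  have := powR_ge0 y nu; nra.
rewrite addrC [_ + y `^ nu]addrC.
apply: (le_trans (PL2 x0 (ltW xy))).
have := powR_ge0 x nu; nra.
Qed.

Lemma PL4 (b d : R) : 0 <= b -> 0 <= d ->
  ((b + d) `^ nu - b `^ nu) * b `^ (1 - nu) <= nu * d.
Proof.
have N0 := nu0; have N1 := nu1.
move=> b0 d0.
have [b00|bn0] := eqVneq b 0.
  rewrite b00 add0r powR0 ?gt_eqF // subr0.
  have [n1|n1] := eqVneq nu 1.
    by rewrite n1 subrr powRr0 mulr1 mul1r powRr1.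
  by rewrite powR0 ?subr_eq0 1?eq_sym // mulr0 mulr_ge0 // ltW.
have bp : 0 < b by rewrite lt_neqAle eq_sym bn0 b0.
have h := Ptan bp (_ : 0 <= b + d); rewrite addrAC subrr add0r in h.
have h' : (b + d) `^ nu - b `^ nu <= nu * b `^ nu * d / b.
  have := h (addr_ge0 b0 d0); lra.
apply: (le_trans (ler_wpM2r (powR_ge0 _ _) h')).
have -> : nu * b `^ nu * d / b * b `^ (1 - nu) = nu * d * (b `^ nu * b `^ (1 - nu)) / b by ring.
by rewrite (PQ b0) mulfK // gt_eqF.
Qed.

Lemma PL3 (a b : R) : 0 <= a -> a <= b ->
  (b `^ nu - a `^ nu) * b `^ (1 - nu) <= b - a.
Proof.
have N0 := nu0; have N1 := nu1.
move=> a0 ab.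
have b0 : 0 <= b by apply: le_trans ab.
rewrite mulrBl (PQ b0) lerD2l lerN2.
rewrite -{1}(PQ a0) ler_wpM2l ?powR_ge0 //.
exact: Qmono.
Qed.

Lemma Phard (a b : R) : 0 < a -> a <= b -> b <= 2 * a ->
  (b `^ nu - a `^ nu) * b `^ (1 - nu) <= 2 `^ (1 - nu) * nu * (b - a).
Proof.
have N0 := nu0; have N1 := nu1.
move=> a0 ab b2a.
have b0 : 0 <= b by apply: le_trans ab; exact: ltW.
have h := Ptan a0 b0.
have h' : b `^ nu - a `^ nu <= nu * a `^ nu * (b - a) / a by lra.
apply: (le_trans (ler_wpM2r (powR_ge0 _ _) h')).
have hB : b `^ (1 - nu) <= 2 `^ (1 - nu) * a `^ (1 - nu).
  rewrite -powRM //; last exact: ltW.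
  by apply: Qmono.
have k0 : 0 <= nu * a `^ nu * (b - a) / a.
  by rewrite divr_ge0 ?mulr_ge0 ?powR_ge0 ?subr_ge0 // ltW.
apply: (le_trans (ler_wpM2l k0 hB)).
have -> : nu * a `^ nu * (b - a) / a * (2 `^ (1 - nu) * a `^ (1 - nu)) =
  2 `^ (1 - nu) * nu * (b - a) * (a `^ nu * a `^ (1 - nu)) / a by ring.
by rewrite (PQ (ltW a0)) mulfK // gt_eqF.
Qed.
End Pw2.

Section Ex.
Variable R : realType.

Lemma E2 (x y B D : R) : 0 <= x -> x <= y -> 0 < y -> 0 <= B -> 0 <= D ->
  x * B <= D * y -> (expR x - 1) * B <= D * (expR y - 1).
Proof.
move=> x0 xy y0 B0 D0 h.
have xy2 : 0 <= x <= y by rewrite x0 xy.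
have c := @expconv R x y xy2 y0.
have e1 : 0 <= expR y - 1 by have := expR_ge1Dx y; lra.
have h2 : y * (expR x - 1) * B <= y * (D * (expR y - 1)).
  apply: (le_trans (ler_wpM2r B0 c)).
  rewrite -mulrA mulrCA mulrA [y * _]mulrC -[X in _ <= X]mulrA.
  have := ler_wpM2l e1 h; rewrite !mulrA; nra.
by rewrite -mulrA ler_pM2l in h2.
Qed.

Lemma ex1 (A B : R) : A <= B -> expR B - expR A <= expR B * (B - A).
Proof.
move=> ab.
have e : expR A = expR B * expR (A - B) by rewrite -expRD addrCA subrr addr0.
have := expR_ge1Dx (A - B); have := expR_gt0 B.
rewrite e; nra.
Qed.

Lemma ex2 (z : R) : 0 <= z -> 2 * z <= expR z.
Proof.
move=> z0.
have e : expR z = expR (z / 2) * expR (z / 2) by rewrite -expRD -splitr.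
have h := expR_ge1Dx (z / 2).
have h0 : 0 <= 1 + z / 2 by lra.
have h2 := ler_pM h0 h0 h h.
have := sqr_ge0 (z / 2 - 1); rewrite e; nra.
Qed.

End Ex.

Section Phi.
Variables (R : realType) (nu rho : R) (psi : R -> R).
Hypotheses (nu0 : 0 < nu) (nu1 : nu <= 1) (rho0 : 0 < rho).
Hypotheses (psim : forall u v, u <= v -> psi u <= psi v)
  (psiS : forall u v, v <= u -> psi u <= psi v + (u - v))
  (psig : forall u, u <= psi u).

Definition Phi (t : R) := rho * psi (t `^ nu).

Lemma PhiS x y d : 0 <= d -> x `^ nu <= y `^ nu + d -> Phi x <= Phi y + rho * d.
Proof.
move=> d0 h; rewrite /Phi -mulrDr ler_pM2l //.
apply: (le_trans (psim h)).
have := psiS (_ : y `^ nu <= y `^ nu + d); rewrite addrAC subrr add0r.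
by apply; rewrite lerDl.
Qed.

Lemma Phimono x y : x `^ nu <= y `^ nu -> Phi x <= Phi y.
Proof. by move=> h; rewrite /Phi ler_pM2l // psim. Qed.

Lemma Phige t : rho * t `^ nu <= Phi t.
Proof. by rewrite /Phi ler_pM2l. Qed.

Lemma Phige0 t : 0 <= Phi t.
Proof. exact: le_trans (mulr_ge0 (ltW rho0) (powR_ge0 _ _)) (Phige t). Qed.

Local Notation g t := (expR (Phi t)).
Local Notation hh t := (expR (rho * t `^ nu * nu)).
Local Notation Q t := (t `^ (1 - nu)).

Lemma part1 a b c : 0 <= a -> 0 <= b -> 0 <= c -> a <= c + b ->
  g a <= g c * g b.
Proof.
move=> a0 b0 c0 acb.
rewrite -expRD ler_expR.
have h : a `^ nu <= b `^ nu + c `^ nu.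
  apply: (le_trans (Pmono nu0 nu1 a0 acb)); rewrite addrC.
  exact: PL1.
apply: (le_trans (PhiS (powR_ge0 _ _) h)).
by rewrite addrC lerD2r Phige.
Qed.

Lemma part2 a b c : 0 <= a -> 0 <= b -> 0 <= c -> a <= c + b ->
  Num.min a b <= c -> g a <= g c * hh b.
Proof.
move=> a0 b0 c0 acb; rewrite ge_min => /orP[ac|bc].
  rewrite -expRD ler_expR.
  apply: (le_trans (Phimono (Pmono nu0 nu1 a0 ac))).
  by rewrite lerDl !mulr_ge0 ?powR_ge0 //; apply: ltW.
rewrite -expRD ler_expR.
have h : a `^ nu <= c `^ nu + nu * b `^ nu.
  apply: (le_trans (Pmono nu0 nu1 a0 acb)).
  exact: PL2.
have := PhiS (mulr_ge0 (ltW nu0) (powR_ge0 b nu)) h.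
by rewrite [nu * _]mulrC mulrA.
Qed.


Lemma eQ c : 0 <= c -> Q c * (rho * c `^ nu) = rho * c.
Proof. by move=> c0; rewrite mulrCA [Q c * _]mulrC (PQ nu0 nu1 c0). Qed.

Lemma part3 a b c : 0 <= a -> 0 <= b -> 0 <= c -> a <= c + b -> b <= a + c ->
  `|g a - g b| * Q b <= Q c * g c * g b.
Proof.
have N0 := nu0; have N1 := nu1; have r0 := rho0.
move=> a0 b0 c0 acb bac.
have Qb0 := powR_ge0 b (1 - nu); have Qc0 := powR_ge0 c (1 - nu).
have gb0 := expR_gt0 (Phi b).
case: (leP (Phi a) (Phi b)) => hab.
- rewrite distrC ger0_norm; last by rewrite subr_ge0 ler_expR.
  case: (leP (b `^ nu) (a `^ nu)) => hp.
    have e : Phi a = Phi b by apply: le_anti; rewrite hab Phimono.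
    by rewrite e subrr mul0r !mulr_ge0 ?expR_ge0 ?powR_ge0.
  have ab : a <= b.
    case: (leP a b) => // /ltW ba.
    by have := Pmono nu0 nu1 b0 ba; rewrite leNgt hp.
  have w1 : Phi b <= Phi a + rho * (b `^ nu - a `^ nu).
    by apply: PhiS; [rewrite subr_ge0 ltW | rewrite addrC subrK].
  have s1 : (Phi b - Phi a) * Q b <= rho * c.
    have w2 : Phi b - Phi a <= rho * (b `^ nu - a `^ nu) by lra.
    apply: le_trans (ler_wpM2r Qb0 w2) _.
    rewrite -mulrA; apply: le_trans (ler_wpM2l (ltW rho0) (PL3 nu0 nu1 a0 ab)) _.
    rewrite ler_pM2l //; lra.
  have s2 : rho * c <= Q c * g c.
    rewrite -(eQ c0); apply: ler_wpM2l => //.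
    have := expR_ge1Dx (Phi c); have := Phige c; lra.
  have L := ex1 hab.
  apply: le_trans (ler_wpM2r Qb0 L) _.
  rewrite -[X in X <= _]mulrA; apply: le_trans (ler_wpM2l (ltW gb0) s1) _.
  apply: le_trans (ler_wpM2l (ltW gb0) s2) _.
  by rewrite mulrC.
- rewrite ger0_norm; last by rewrite subr_ge0 ler_expR ltW.
  have hp : b `^ nu < a `^ nu.
    by rewrite ltNge; apply/negP => h; have := Phimono h; rewrite leNgt hab.
  have ba : b < a.
    by rewrite ltNge; apply/negP => h; have := Pmono nu0 nu1 a0 h; rewrite leNgt hp.
  have x0 : 0 < Phi a - Phi b by rewrite subr_gt0.
  have d0 : 0 <= (b + c) `^ nu - b `^ nu.
    by rewrite subr_ge0; apply: (Pmono nu0 nu1 b0); rewrite lerDl.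
  have hbc : a `^ nu <= b `^ nu + ((b + c) `^ nu - b `^ nu).
    by rewrite addrC subrK; apply: (Pmono nu0 nu1 a0); rewrite addrC.
  have w := PhiS d0 hbc.
  have dP : (b + c) `^ nu - b `^ nu <= c `^ nu by have := PL1 nu0 nu1 b0 c0; lra.
  have xy : Phi a - Phi b <= rho * c `^ nu.
    have := ler_wpM2l (ltW rho0) dP; lra.
  have y0 : 0 < rho * c `^ nu by apply: lt_le_trans x0 xy.
  have xB : (Phi a - Phi b) * Q b <= Q c * (rho * c `^ nu).
    rewrite (eQ c0).
    have w2 : Phi a - Phi b <= rho * ((b + c) `^ nu - b `^ nu) by lra.
    apply: le_trans (ler_wpM2r Qb0 w2) _.
    rewrite -mulrA; apply: le_trans (ler_wpM2l (ltW rho0) (PL4 nu0 nu1 b0 c0)) _.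
    rewrite ler_pM2l //; nra.
  have E := E2 (ltW x0) xy y0 Qb0 Qc0 xB.
  have eg : g a = g b * expR (Phi a - Phi b) by rewrite -expRD addrC subrK.
  rewrite eg.
  have -> : (g b * expR (Phi a - Phi b) - g b) * Q b =
    g b * ((expR (Phi a - Phi b) - 1) * Q b) by ring.
  apply: le_trans (ler_wpM2l (ltW gb0) E) _.
  rewrite mulrC ler_wpM2r ?expR_ge0 // ler_wpM2l //.
  have : expR (rho * c `^ nu) <= g c by rewrite ler_expR Phige.
  lra.
Qed.


Lemma two_pow : 1 <= 2 `^ (1 - nu) <= 2.
Proof.
have N0 := nu0; have N1 := nu1.
apply/andP; split.
  have h := @ler_powR R 2 (_ : 1 <= 2) 0 (1 - nu).
  rewrite powRr0 in h; apply: h; lra.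
have h := @ler1_powR R 2 (1 - nu) (_ : 1 <= 2).
apply: h; lra.
Qed.

Lemma Qdouble b c : 0 <= b -> 0 <= c -> b <= 2 * c -> Q b <= 2 `^ (1 - nu) * Q c.
Proof.
have N0 := nu0; have N1 := nu1.
move=> b0 c0 bc; rewrite -powRM //.
exact: (Qmono nu0 nu1 b0 bc).
Qed.

Lemma normle (A B M : R) : 0 <= A -> A <= M -> 0 <= B -> B <= M -> `|A - B| <= M.
Proof. move=> *; rewrite ler_norml; apply/andP; split; lra. Qed.

Lemma mono3 (K Qc H : R) : 1 <= K -> 0 <= Qc -> 1 <= H -> Qc <= K * Qc * H.
Proof.
move=> K1 Q0 H1.
have h1 : Qc <= K * Qc by rewrite ler_peMl.
have h2 : K * Qc <= K * Qc * H by rewrite ler_peMr // mulr_ge0 //; lra.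
lra.
Qed.

Definition KK (a b c : R) := if (a <= c) && (c <= b) then 2 `^ (1 - nu) else 1.

Lemma KK1 a b c : 1 <= KK a b c.
Proof. rewrite /KK; case: ifP => // _; by case/andP: two_pow. Qed.

End Phi.

Section Phi4.
Variables (R : realType) (nu rho : R) (psi : R -> R).
Hypotheses (nu0 : 0 < nu) (nu1 : nu <= 1) (rho0 : 0 < rho).
Hypotheses (psim : forall u v, u <= v -> psi u <= psi v)
  (psiS : forall u v, v <= u -> psi u <= psi v + (u - v))
  (psig : forall u, u <= psi u).
Local Notation Phi := (Phi nu rho psi).
Local Notation PhiS := (PhiS rho0 psim psiS).
Local Notation Phimono := (Phimono rho0 psim).
Local Notation Phige := (Phige nu rho0 psig).
Local Notation g t := (expR (Phi t)).
Local Notation hh t := (expR (rho * t `^ nu * nu)).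
Local Notation Q t := (t `^ (1 - nu)).
Local Notation KK := (KK nu).
Local Notation eQ := (eQ rho nu0 nu1).
Local Notation two_pow := (two_pow nu0 nu1).
Local Notation KK1 := (KK1 nu0 nu1).
Lemma part4 a b c : 0 <= a -> 0 <= b -> 0 <= c -> a <= c + b -> b <= a + c ->
  Num.min a c <= b ->
  `|g a - g b| * Q b <= KK a b c * Q c * hh c * g b.
Proof.
have N0 := nu0; have N1 := nu1; have r0 := rho0.
move=> a0 b0 c0 acb bac mab.
have Qb0 := powR_ge0 b (1 - nu); have Qc0 := powR_ge0 c (1 - nu).
have gb0 := expR_gt0 (Phi b).
have K1 := KK1 a b c.
have z0 : 0 <= rho * c `^ nu * nu by rewrite !mulr_ge0 ?powR_ge0 // ltW.
have ez := expR_ge1Dx (rho * c `^ nu * nu).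
case: (leP (Phi a) (Phi b)) => hab.
- rewrite distrC ger0_norm; last by rewrite subr_ge0 ler_expR.
  have eg : g a = g b * expR (Phi a - Phi b) by rewrite -expRD addrC subrK.
  rewrite eg.
  have -> : (g b - g b * expR (Phi a - Phi b)) * Q b =
    g b * ((1 - expR (Phi a - Phi b)) * Q b) by ring.
  rewrite [X in _ <= X]mulrC; apply: ler_wpM2l; first exact: ltW.
  have u1 : 0 <= 1 - expR (Phi a - Phi b) <= 1.
    have : expR (Phi a - Phi b) <= 1 by rewrite -expR0 ler_expR; lra.
    have := expR_gt0 (Phi a - Phi b); move=> *; apply/andP; split; lra.
  have uw : 1 - expR (Phi a - Phi b) <= Phi b - Phi a.
    have := expR_ge1Dx (Phi a - Phi b); lra.
  case/andP: u1 => u0 u1.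
  case: (leP b c) => hbc.
    have hQ := Qmono nu0 nu1 b0 hbc.
    have h1 : (1 - expR (Phi a - Phi b)) * Q b <= Q c.
      by rewrite -[X in _ <= X]mul1r; apply: ler_pM.
    apply: le_trans h1 _.
    apply: mono3 => //; lra.
  case: (leP a c) => hac.
    have eK : KK a b c = 2 `^ (1 - nu) by rewrite /KK hac (ltW hbc).
    rewrite eK.
    have hQ : Q b <= 2 `^ (1 - nu) * Q c by apply: Qdouble => //; lra.
    have h1 : (1 - expR (Phi a - Phi b)) * Q b <= 2 `^ (1 - nu) * Q c.
      by apply: le_trans hQ; rewrite -[X in _ <= X]mul1r; apply: ler_wpM2r.
    apply: le_trans h1 _.
    have := powR_ge0 2 (1 - nu); nra.
  case: (leP b a) => hba.
    have e : Phi a = Phi b by apply: le_anti; rewrite hab Phimono // (Pmono nu0 nu1 b0).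
    rewrite e subrr expR0 subrr mul0r !mulr_ge0 ?expR_ge0 //; lra.
  have a0' : 0 < a by apply: le_lt_trans hac.
  have w1 : Phi b <= Phi a + rho * (b `^ nu - a `^ nu).
    apply: PhiS; last by rewrite addrC subrK.
    by rewrite subr_ge0 (Pmono nu0 nu1 a0 (ltW hba)).
  have hd := Phard nu0 nu1 a0' (ltW hba) (_ : b <= 2 * a).
  have {}hd : (b `^ nu - a `^ nu) * Q b <= 2 `^ (1 - nu) * nu * (b - a) by apply: hd; lra.
  have s1 : (1 - expR (Phi a - Phi b)) * Q b <= rho * (2 `^ (1 - nu) * nu * c).
    have w2 : 1 - expR (Phi a - Phi b) <= rho * (b `^ nu - a `^ nu) by lra.
    apply: le_trans (ler_wpM2r Qb0 w2) _.
    rewrite -[X in X <= _]mulrA ler_pM2l //.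
    apply: le_trans hd _.
    have := two_pow; case/andP => t1 _.
    have hc : b - a <= c by rewrite lerBlDr addrC.
    apply: ler_wpM2l => //; rewrite mulr_ge0 ?powR_ge0 //; exact: ltW.
  apply: le_trans s1 _.
  have -> : rho * (2 `^ (1 - nu) * nu * c) =
     Q c * (2 `^ (1 - nu) * (rho * c `^ nu * nu)).
    have e := eQ c0.
    have -> : rho * (2 `^ (1 - nu) * nu * c) = 2 `^ (1 - nu) * nu * (rho * c) by ring.
    rewrite -e; ring.
  have e2 := ex2 z0.
  have := two_pow; case/andP => _ t2.
  have h3 : 2 `^ (1 - nu) * (rho * c `^ nu * nu) <= 2 * (rho * c `^ nu * nu).
    by apply: ler_wpM2r.
  have h4 : hh c <= KK a b c * hh c by rewrite ler_peMl ?expR_ge0.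
  have h : 2 `^ (1 - nu) * (rho * c `^ nu * nu) <= KK a b c * hh c.
    exact: le_trans h3 (le_trans e2 h4).
  rewrite [KK a b c * Q c]mulrC -[X in _ <= X]mulrA.
  by apply: ler_wpM2l.
- rewrite ger0_norm; last by rewrite subr_ge0 ler_expR ltW.
  have hp : b `^ nu < a `^ nu.
    by rewrite ltNge; apply/negP => h; have := Phimono h; rewrite leNgt hab.
  have ba : b < a.
    by rewrite ltNge; apply/negP => h; have := Pmono nu0 nu1 a0 h; rewrite leNgt hp.
  have cb : c <= b.
    by move: mab; rewrite ge_min leNgt ba.
  have x0 : 0 < Phi a - Phi b by rewrite subr_gt0.
  have d0 : 0 <= (b + c) `^ nu - b `^ nu.
    by rewrite subr_ge0; apply: (Pmono nu0 nu1 b0); rewrite lerDl.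
  have hbc : a `^ nu <= b `^ nu + ((b + c) `^ nu - b `^ nu).
    by rewrite addrC subrK; apply: (Pmono nu0 nu1 a0); rewrite addrC.
  have w := PhiS d0 hbc.
  have dP : (b + c) `^ nu - b `^ nu <= nu * c `^ nu by have := PL2 nu0 nu1 c0 cb; lra.
  have xy : Phi a - Phi b <= rho * c `^ nu * nu.
    have := ler_wpM2l (ltW rho0) dP; rewrite [nu * _]mulrC mulrA; lra.
  have y0 : 0 < rho * c `^ nu * nu by apply: lt_le_trans x0 xy.
  have xB : (Phi a - Phi b) * Q b <= Q c * (rho * c `^ nu * nu).
    have -> : Q c * (rho * c `^ nu * nu) = (Q c * (rho * c `^ nu)) * nu by ring.
    rewrite (eQ c0).
    have w2 : Phi a - Phi b <= rho * ((b + c) `^ nu - b `^ nu) by lra.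
    apply: le_trans (ler_wpM2r Qb0 w2) _.
    rewrite -[X in X <= _]mulrA (mulrAC rho c nu) -[X in _ <= X]mulrA; apply: ler_wpM2l; first exact: ltW.
    have p4 := PL4 nu0 nu1 b0 c0. exact p4.
  have E := E2 (ltW x0) xy y0 Qb0 Qc0 xB.
  have eg : g a = g b * expR (Phi a - Phi b) by rewrite -expRD addrC subrK.
  rewrite eg.
  have -> : (g b * expR (Phi a - Phi b) - g b) * Q b =
    g b * ((expR (Phi a - Phi b) - 1) * Q b) by ring.
  apply: le_trans (ler_wpM2l (ltW gb0) E) _.
  rewrite mulrC ler_wpM2r ?expR_ge0 //.
  have h1 : Q c * (hh c - 1) <= Q c * hh c.
    by apply: ler_wpM2l => //; rewrite lerBlDr lerDl.
  apply: le_trans h1 _.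
  have h2 := ler_wpM2r (mulr_ge0 Qc0 (expR_ge0 (rho * c `^ nu * nu))) K1.
  rewrite mul1r mulrA in h2; exact h2.
Qed.

End Phi4.

Section Phi5.
Variables (R : realType) (nu rho : R) (psi : R -> R).
Hypotheses (nu0 : 0 < nu) (nu1 : nu <= 1) (rho0 : 0 < rho).
Hypotheses (psim : forall u v, u <= v -> psi u <= psi v)
  (psiS : forall u v, v <= u -> psi u <= psi v + (u - v))
  (psig : forall u, u <= psi u).
Local Notation Phi := (Phi nu rho psi).
Local Notation PhiS := (PhiS rho0 psim psiS).
Local Notation Phimono := (Phimono rho0 psim).
Local Notation Phige := (Phige nu rho0 psig).
Local Notation g t := (expR (Phi t)).
Local Notation hh t := (expR (rho * t `^ nu * nu)).
Local Notation Q t := (t `^ (1 - nu)).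
Local Notation KK := (KK nu).
Local Notation eQ := (eQ rho nu0 nu1).
Local Notation two_pow := (two_pow nu0 nu1).
Local Notation KK1 := (KK1 nu0 nu1).
Local Notation part2 := (part2 nu0 nu1 rho0 psim psiS).

Lemma part5 (a b c : R) : 0 <= a -> 0 <= b -> 0 <= c -> a <= c + b -> b <= a + c ->
  Num.min a b <= c ->
  `|g a - g b| * Q b <= KK a b c * Q c * g c * hh b.
Proof.
have N0 := nu0; have N1 := nu1; have r0 := rho0.
move=> a0 b0 c0 acb bac mab.
have Qb0 := powR_ge0 b (1 - nu); have Qc0 := powR_ge0 c (1 - nu).
have K1 := KK1 a b c.
have hb1 : 1 <= hh b.
  have := expR_ge1Dx (rho * b `^ nu * nu).
  have : 0 <= rho * b `^ nu * nu by rewrite !mulr_ge0 ?powR_ge0 // ltW.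
  lra.
have gcM : g c <= g c * hh b by rewrite ler_peMr ?expR_ge0.
have ha := part2 a0 b0 c0 acb mab.
have M0 : 0 <= g c * hh b by rewrite mulr_ge0 ?expR_ge0.
have fin : forall K', 0 <= K' -> g b <= g c * hh b -> Q b <= K' * Q c ->
    K' <= KK a b c ->
    `|g a - g b| * Q b <= KK a b c * Q c * g c * hh b.
  move=> K' K'0 hb hQ hK.
  have hn := normle (expR_ge0 _) ha (expR_ge0 _) hb.
  have h1 := ler_pM (normr_ge0 _) Qb0 hn hQ.
  apply: le_trans h1 _.
  have -> : KK a b c * Q c * g c * hh b = (g c * hh b) * (KK a b c * Q c) by ring.
  apply: ler_wpM2l => //.
  by apply: ler_wpM2r.
case: (leP b c) => hbc.
  apply: (fin 1) => //.
  - apply: le_trans gcM; rewrite ler_expR; apply: Phimono.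
    have h := Pmono nu0 nu1 b0 hbc; exact h.
  - have h := Qmono nu0 nu1 b0 hbc; rewrite mul1r; exact h.
have ac : a <= c.
  move: mab; rewrite ge_min => /orP[//|h].
  by move: hbc; rewrite ltNge h.
have eK : KK a b c = 2 `^ (1 - nu) by rewrite /KK ac (ltW hbc).
have b2c : b <= 2 * c by lra.
apply: (fin (2 `^ (1 - nu))).
- exact: powR_ge0.
- have bc0 : 0 <= b - c by rewrite subr_ge0 ltW.
  have bcc : b - c <= c by rewrite lerBlDr -mulr2n -mulr_natl.
  have h1 := PL2 nu0 nu1 bc0 bcc.
  rewrite addrC subrK in h1.
  have h2 : (b - c) `^ nu <= b `^ nu by apply: (Pmono nu0 nu1 bc0); rewrite lerBlDr lerDl.
  have h3 : b `^ nu <= c `^ nu + nu * b `^ nu.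
    apply: le_trans h1 _; rewrite lerD2l; apply: ler_wpM2l => //; exact: ltW.
  have h4 := PhiS (mulr_ge0 (ltW nu0) (powR_ge0 b nu)) h3.
  rewrite -expRD ler_expR; apply: le_trans h4 _.
  by rewrite (mulrC nu) mulrA.
- have h := Qdouble nu0 nu1 b0 c0 b2c; exact h.
- by rewrite eK.
Qed.

End Phi5.



Section V.
Variables (R : realType) (n : nat).

Lemma sum0_all (u : 'I_n -> R) : \sum_i u i ^+ 2 = 0 -> forall i, u i = 0.
Proof.
move=> h i; have := @psumr_eq0P R _ predT (fun i => u i ^+ 2) (fun i _ => sqr_ge0 (u i)) h i isT.
by move/eqP; rewrite sqrf_eq0 => /eqP.
Qed.

Lemma CS (u v : 'I_n -> R) :
  \sum_i u i * v i <= Num.sqrt (\sum_i u i ^+ 2) * Num.sqrt (\sum_i v i ^+ 2).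
Proof.
set X := \sum_i u i ^+ 2; set Y := \sum_i v i ^+ 2.
have X0 : 0 <= X by apply: sumr_ge0 => i _; exact: sqr_ge0.
have Y0 : 0 <= Y by apply: sumr_ge0 => i _; exact: sqr_ge0.
set p := Num.sqrt X; set q := Num.sqrt Y.
have pX : p ^+ 2 = X by rewrite sqr_sqrtr.
have qY : q ^+ 2 = Y by rewrite sqr_sqrtr.
have p0 : 0 <= p := sqrtr_ge0 X.
have q0 : 0 <= q := sqrtr_ge0 Y.
have [pe|pn] := eqVneq p 0.
  have hX : X = 0 by rewrite -pX pe expr0n.
  rewrite big1; first by rewrite mulr_ge0.
  by move=> i _; rewrite (sum0_all hX) mul0r.
have [qe|qn] := eqVneq q 0.
  have hY : Y = 0 by rewrite -qY qe expr0n.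
  rewrite big1; first by rewrite mulr_ge0.
  by move=> i _; rewrite (sum0_all hY) mulr0.
have pp : 0 < p by rewrite lt_neqAle eq_sym pn p0.
have qp : 0 < q by rewrite lt_neqAle eq_sym qn q0.
have key : 0 <= \sum_i (q * u i - p * v i) ^+ 2 by apply: sumr_ge0 => i _; exact: sqr_ge0.
have e : \sum_i (q * u i - p * v i) ^+ 2 =
   q ^+ 2 * X - 2 * p * q * (\sum_i u i * v i) + p ^+ 2 * Y.
  rewrite /X /Y !mulr_sumr -sumrB -big_split /=.
  by apply: eq_bigr => i _; ring.
rewrite e pX qY in key.
have pq : 0 < p * q by rewrite mulr_gt0.
set S := \sum_i u i * v i in key *.
rewrite -pX -qY in key.
nra.
Qed.

Lemma enorm_ge0 (x : 'rV[R]_n) : 0 <= enorm x.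
Proof. exact: sqrtr_ge0. Qed.

Lemma enorm_opp (x : 'rV[R]_n) : enorm (- x) = enorm x.
Proof. by rewrite /enorm; congr Num.sqrt; apply: eq_bigr => i _; rewrite mxE sqrrN. Qed.

Lemma enorm_tri (x y : 'rV[R]_n) : enorm (x + y) <= enorm x + enorm y.
Proof.
rewrite /enorm.
set X := \sum_i x 0 i ^+ 2; set Y := \sum_i y 0 i ^+ 2.
have X0 : 0 <= X by apply: sumr_ge0 => i _; exact: sqr_ge0.
have Y0 : 0 <= Y by apply: sumr_ge0 => i _; exact: sqr_ge0.
have cs := CS (fun i => x 0 i) (fun i => y 0 i).
rewrite -/X -/Y in cs.
have pX : Num.sqrt X ^+ 2 = X by rewrite sqr_sqrtr.
have qY : Num.sqrt Y ^+ 2 = Y by rewrite sqr_sqrtr.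
have s0 : 0 <= Num.sqrt X + Num.sqrt Y by rewrite addr_ge0 ?sqrtr_ge0.
rewrite -[X in _ <= X]ger0_norm // -sqrtr_sqr ler_sqrt; last exact: sqr_ge0.
have e : \sum_i (x + y) 0 i ^+ 2 = X + Y + 2 * \sum_i x 0 i * y 0 i.
  rewrite /X /Y mulr_sumr -!big_split /=.
  by apply: eq_bigr => i _; rewrite mxE; ring.
rewrite e.
have -> : (Num.sqrt X + Num.sqrt Y) ^+ 2 = X + Y + 2 * (Num.sqrt X * Num.sqrt Y).
  by rewrite sqrrD pX qY; ring.
lra.
Qed.

End V.

Section Final.
Variables (R : realType) (nu rho : R).
Hypotheses (nu0 : 0 < nu) (nu1 : nu <= 1) (rho0 : 0 < rho).

Lemma est_gen (psi : R -> R)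
  (psim : forall u v, u <= v -> psi u <= psi v)
  (psiS : forall u v, v <= u -> psi u <= psi v + (u - v))
  (psig : forall u, u <= psi u)
  (n : nat) (g : 'rV[R]_n -> R)
  (hg : forall x, g x = expR (Phi nu rho psi (enorm x))) :
  estimates nu g (@f0 R n rho nu).
Proof.
move=> xi eta.
have hf : forall x : 'rV[R]_n, powR (f0 rho nu x) nu = expR (rho * enorm x `^ nu * nu).
  by move=> x; rewrite /f0 -expRM.
rewrite !hg !hf.
have -> : Cconst nu xi eta = KK nu (enorm xi) (enorm eta) (enorm (xi - eta)) by [].
have a0 := enorm_ge0 xi; have b0 := enorm_ge0 eta; have c0 := enorm_ge0 (xi - eta).
have acb : enorm xi <= enorm (xi - eta) + enorm eta.
  by have := enorm_tri (xi - eta) eta; rewrite subrK.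
have bac : enorm eta <= enorm xi + enorm (xi - eta).
  have := enorm_tri xi (- (xi - eta)); rewrite enorm_opp opprB addrC subrK; exact.
split; first exact: (part1 nu0 nu1 rho0 psim psiS psig a0 b0 c0 acb).
split; first by move=> h; exact: (part2 nu0 nu1 rho0 psim psiS a0 b0 c0 acb h).
split; first exact: (part3 nu0 nu1 rho0 psim psiS psig a0 b0 c0 acb bac).
split; first by move=> h; exact: (part4 nu0 nu1 rho0 psim psiS a0 b0 c0 acb bac h).
by move=> h; exact: (part5 nu0 nu1 rho0 psim psiS a0 b0 c0 acb bac h).
Qed.

End Final.

Unset Implicit Arguments.

Theorem lemma3p1 (R : realType) (n : nat) (nu rho : R)
  (hn : (1 <= n)%N) (hnu0 : 0 < nu) (hnu1 : nu <= 1) (hrho : 0 < rho) :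
  estimates nu (@fw R n rho nu) (@f0 R n rho nu) /\
  estimates nu (@f0 R n rho nu) (@f0 R n rho nu).
Proof.
split.
- apply: (@est_gen R nu rho hnu0 hnu1 hrho (fun u => Num.max u 1)) => //.
  + by move=> u v uv; rewrite ge_max !le_max uv lexx !orbT.
  + move=> u v vu; rewrite ge_max.
    have h1 : v <= Num.max v 1 by rewrite le_max lexx.
    have h2 : 1 <= Num.max v 1 by rewrite le_max lexx orbT.
    apply/andP; split; lra.
  + by move=> u; rewrite le_max lexx.
- apply: (@est_gen R nu rho hnu0 hnu1 hrho (fun u => u)) => //.
  by move=> u v vu; rewrite addrC subrK.
Qed.
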